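(* Let $A$ be a normalized real $n\times n$ matrix. For any two stationary points $x_1^\star,x_2^\star\in\Delta_n$ of $f_A$, $$|f_A(x_1^\star)-f_A(x_2^\star)|\le (x_1^\star-x_2^\star)^\tau A(x_1^\star-x_2^\star).$$
   Context: $\Delta_n=\{u\in\mathbb{R}^n:u\ge0,\ e^\tau u=1\}$ ($e$ the all-ones vector). A square matrix is normalized if its maximum entry is $1$ and its minimum entry is $0$. For $u\in\mathbb{R}^n$, $\max(u)$ is its largest entry. $f_A(x)=\max(Ax)-x^\tau Ax$ for $x\in\Delta_n$. For $x,x'\in\Delta_n$, $D_A(x',x)=\lim_{\epsilon\to0^+}\frac1\epsilon\big(f_A((1-\epsilon)x+\epsilon x')-f_A(x)\big)$ (this limit exists). A point $x^\star\in\Delta_n$ is a stationary point of $f_A$ if $D_A(x,x^\star)\ge0$ for all $x\in\Delta_n$. *)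

(* Defs.v *)
From HB Require Import structures.
From mathcomp Require Import all_boot all_order all_algebra.
From mathcomp Require Import all_classical all_reals all_analysis.
Set Implicit Arguments. Unset Strict Implicit. Unset Printing Implicit Defensive.
Import Order.TTheory GRing.Theory Num.Theory.
Import numFieldNormedType.Exports.
Local Open Scope ring_scope.

Definition simplex (R : realType) (n : nat) (u : 'cV[R]_n) : Prop :=
  (forall i, 0 <= u i 0) /\ \sum_(i < n) u i 0 = 1.

Definition normalized (R : realType) (n : nat) (A : 'M[R]_n) : Prop :=
  (forall i j, 0 <= A i j <= 1) /\
  (exists i j, A i j = 1) /\ (exists i j, A i j = 0).

(* max(u): largest entry (0 for the empty vector, irrelevant) *)
Definition vmax (R : realType) (n : nat) : 'cV[R]_n -> R :=
  match n return 'cV[R]_n -> R with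
  | 0 => fun _ => 0
  | m.+1 => fun u => \big[Num.max/u ord0 0]_(i < m.+1) u i 0
  end.

Definition qform (R : realType) (n : nat) (A : 'M[R]_n) (x : 'cV[R]_n) : R :=
  (x^T *m A *m x) 0 0.

Definition fA (R : realType) (n : nat) (A : 'M[R]_n) (x : 'cV[R]_n) : R :=
  vmax (A *m x) - qform A x.

Definition DA (R : realType) (n : nat) (A : 'M[R]_n) (x' x : 'cV[R]_n) : R :=
  lim ((fun eps : R => (fA A ((1 - eps) *: x + eps *: x') - fA A x) / eps)
         @ 0^'+)%classic.

Definition stationary (R : realType) (n : nat) (A : 'M[R]_n) (xs : 'cV[R]_n)
  : Prop :=
  simplex xs /\ forall x : 'cV[R]_n, simplex x -> 0 <= DA A x xs.

(* Main.v *)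
Require Import Defs.
From HB Require Import structures.
From mathcomp Require Import all_boot all_order all_algebra.
From mathcomp Require Import all_classical all_reals all_analysis.
From mathcomp Require Import ring lra.
Import Order.TTheory GRing.Theory Num.Theory.
Import numFieldNormedType.Exports.
Local Open Scope ring_scope.

Section S.
Variables (R : realType) (m : nat).

Lemma vmax_le (u : 'cV[R]_m.+1) c : (forall i, u i 0 <= c) -> vmax u <= c.
Proof. move=> H; rewrite /=; apply: bigmax_le => // i _; exact: H. Qed.

Lemma le_vmax (u : 'cV[R]_m.+1) i : u i 0 <= vmax u.
Proof. rewrite /=. exact: (le_bigmax _ (fun j => u j 0) i). Qed.

Lemma vmax_arg (u : 'cV[R]_m.+1) : exists k, vmax u = u k 0.
Proof.
case: (@arg_maxP _ _ _ (ord0 : 'I_m.+1) xpredT (fun i => u i 0) isT) => k _ Hk.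
exists k; apply/le_anti; rewrite le_vmax andbT.
by apply: vmax_le => i; apply: Hk.
Qed.

Variables (a b : 'cV[R]_m.+1).
Definition pq (e : R) := (vmax (a + e *: b) - vmax a) / e.

Lemma pq_mono s t : 0 < s -> s <= t -> pq s <= pq t.
Proof.
move=> s0 st; have t0 : 0 < t by apply: lt_le_trans st.
have key : vmax (a + s *: b) <= (1 - s/t) * vmax a + (s/t) * vmax (a + t *: b).
  apply: vmax_le => i.
  have h1 := le_vmax a i; have h2 := le_vmax (a + t *: b) i.
  rewrite !mxE in h2 *.
  have -> : a i 0 + s * b i 0 = (1 - s/t) * a i 0 + (s/t) * (a i 0 + t * b i 0).
    by field; rewrite gt_eqF.
  have l0 : 0 <= s / t by rewrite divr_ge0 // ltW.
  have l1 : s / t <= 1 by rewrite ler_pdivrMr // mul1r.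
  apply: lerD; first by apply: ler_wpM2l => //; rewrite subr_ge0.
  by apply: ler_wpM2l.
have H : vmax (a + s *: b) - vmax a <= s / t * (vmax (a + t *: b) - vmax a) by lra.
rewrite /pq ler_pdivrMr //; apply: (le_trans H); rewrite le_eqVlt; apply/orP; left.
by apply/eqP; field; rewrite gt_eqF.
Qed.

Lemma pq_lb : exists l, forall e, 0 < e -> l <= pq e.
Proof.
case: (vmax_arg a) => k hk; exists (b k 0) => e e0.
rewrite /pq ler_pdivlMr // hk.
have := le_vmax (a + e *: b) k; rewrite !mxE; lra.
Qed.

Lemma pq_cvg : cvg (pq e @[e --> 0^'+])%classic /\ lim (pq e @[e --> 0^'+])%classic <= pq 1.
Proof.
have hc : (pq e @[e --> 0^'+] --> inf (pq @` [set` Interval (BRight (0:R)) (BLeft 1)]))%classic.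
  apply: nondecreasing_at_right_cvgr; first by rewrite bnd_simp.
    move=> x y; rewrite !in_itv /= => /andP[x0 _] /andP[y0 _] xy.
    exact: pq_mono.
  case: pq_lb => l hl; exists l => _ [x /= + <-]; rewrite in_itv /= => /andP[x0 _].
  exact: hl.
split; first by apply/cvg_ex; eexists; exact: hc.
apply: limr_le; first by apply/cvg_ex; eexists; exact: hc.
near=> e; apply: pq_mono; near: e; [exact: nbhs_right_gt | exact: nbhs_right_le].
Unshelve. all: by end_near. Qed.

Lemma key (c q : R) (g : R -> R) :
  (forall e, 0 < e -> g e = pq e - (c + e * q)) ->
  0 <= lim (g e @[e --> 0^'+])%classic -> c <= pq 1.
Proof.
move=> hg hl; case: pq_cvg => hcv hle.
have cg : (g e @[e --> 0^'+] --> lim (pq e @[e --> 0^'+]) - (c + 0 * q))%classic.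
  apply: (cvg_trans _ (cvgB hcv _)); last first.
    apply: cvg_at_right_filter; apply: cvgD; first exact: cvg_cst.
    apply: cvgMl; exact: cvg_id.
  apply: near_eq_cvg; near=> e; rewrite hg //=; near: e; exact: nbhs_right_gt.
rewrite (cvg_lim (@norm_hausdorff _ R^o) cg) in hl. move: hl; rewrite mul0r addr0; lra.
Unshelve. all: by end_near. Qed.


End S.


Definition cross (R : realType) n (A : 'M[R]_n) (x d : 'cV[R]_n) : R :=
  (d^T *m A *m x) 0 0 + (x^T *m A *m d) 0 0.
Arguments cross {R n}.

Lemma qexp (R : realType) n (A : 'M[R]_n) (x d : 'cV[R]_n) (e : R) :
  qform A (x + e *: d) = qform A x + e * cross A x d + e ^+ 2 * qform A d.
Proof.
rewrite /qform /cross.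
have -> : (x + e *: d)^T = x^T + e *: d^T.
  by apply/matrixP => i j; rewrite !mxE.
rewrite !mulmxDl !mulmxDr -!scalemxAl -!scalemxAr !mxE; ring.
Qed.

Lemma qformN (R : realType) n (A : 'M[R]_n) (d : 'cV[R]_n) :
  qform A (- d) = qform A d.
Proof.
rewrite /qform; have -> : (- d)^T = - d^T by apply/matrixP => i j; rewrite !mxE.
by rewrite mulNmx mulmxN mulNmx opprK.
Qed.

Lemma stat_ineq (R : realType) m (A : 'M[R]_m.+1) (x y : 'cV[R]_m.+1) :
  stationary A x -> simplex y ->
  cross A x (y - x) <= vmax (A *m y) - vmax (A *m x).
Proof.
move=> [_ hst] sy; have h0 := hst y sy.
set a := A *m x; set b := A *m (y - x).
have hab : a + b = A *m y by rewrite -mulmxDr addrC subrK.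
have := @key R m a b (cross A x (y - x)) (qform A (y - x))
   (fun e => (fA A ((1 - e) *: x + e *: y) - fA A x) / e).
rewrite /pq divr1 scale1r hab; apply => // e e0.
have -> : (1 - e) *: x + e *: y = x + e *: (y - x).
  by apply/matrixP => i j; rewrite !mxE; ring.
rewrite /fA qexp mulmxDr -scalemxAr -/a -/b.
by field; rewrite gt_eqF.
Qed.

Arguments stat_ineq {R m A x y}.
Arguments qexp {R n}.
Arguments qformN {R n}.

Theorem theorem7 (R : realType) (n : nat) (A : 'M[R]_n) (x1 x2 : 'cV[R]_n) :
  normalized A -> stationary A x1 -> stationary A x2 ->
  `|fA A x1 - fA A x2| <= qform A (x1 - x2).
Proof.
case: n A x1 x2 => [|m] A x1 x2 _ s1 s2.
  by case: s1 => [[_ ]]; rewrite big_ord0 => /esym/eqP; rewrite oner_eq0.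
have i1 := stat_ineq s1 (proj1 s2).
have i2 := stat_ineq s2 (proj1 s1).
have e1 := qexp A x1 (x2 - x1) 1.
have e2 := qexp A x2 (x1 - x2) 1.
rewrite !scale1r addrC subrK in e1; rewrite !scale1r addrC subrK in e2.
have hq : qform A (x2 - x1) = qform A (x1 - x2) by rewrite -qformN opprB.
rewrite /fA ler_norml; apply/andP; split; rewrite expr1n !mul1r in e1 e2; lra.
Qed.
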